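(* Let $\lambda_b>0$, $\alpha>2$, $P>0$, $N>0$, $M\ge 1$ and $\mu\in[1,2]$. Let $(X_{11},X_{21})$ have joint probability density $(2\pi\lambda_b)^2x_{11}x_{21}e^{-\pi\lambda_b x_{21}^2}$ for $0<x_{11}<x_{21}$ and $0$ otherwise, and let $\mathbb{A}_{UE}=\{X_{11}\le M^{\frac{1}{\alpha\mu}}(N/P)^{\frac{2-\mu}{\alpha\mu}}X_{21}^{2/\mu}\}$. Then the probability density function of $X_{11}$ conditioned on $\mathbb{A}_{UE}$ is, for $x_{11}>0$, $$f_{X_{11}}(x_{11}\mid\mathbb{A}_{UE})=\frac{2\pi\lambda_b\,x_{11}\,\exp\!\Big(-\pi\lambda_b\max^2\Big(x_{11},\,x_{11}^{\mu/2}\big(\tfrac{P}{N}\big)^{\frac{2-\mu}{2\alpha}}\big(\tfrac{1}{M}\big)^{\frac{1}{2\alpha}}\Big)\Big)}{\mathbb{P}[\mathbb{A}_{UE}]},$$ where $\max^2(a,b)=(\max(a,b))^2$ and $\mathbb{P}[\mathbb{A}_{UE}]=\int_0^\infty 2(\pi\lambda_b)^2x_{21}e^{-\pi\lambda_b x_{21}^2}\min^2\big(x_{21},M^{\frac{1}{\alpha\mu}}(N/P)^{\frac{2-\mu}{\alpha\mu}}x_{21}^{2/\mu}\big)\,\mathrm{d}x_{21}$.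
   Context: This models a downlink cellular network (base stations of density $\lambda_b$, transmit power $P$, noise power $N$, path-loss exponent $\alpha$) with a scheduling rule based on the ''treating interference as noise'' condition with design parameters $M,\mu$: $X_{11}$ is the serving distance of the typical user, $X_{21}$ its distance to the most interfering base station, and $\mathbb{A}_{UE}$ the event that the typical user is scheduled. The joint density is the model assumed by the paper. *)

(* Defs.v *)
From HB Require Import structures.
From mathcomp Require Import all_boot all_order all_algebra.
From mathcomp Require Import all_classical all_reals all_analysis.
Set Implicit Arguments. Unset Strict Implicit. Unset Printing Implicit Defensive.
Import Order.TTheory GRing.Theory Num.Theory.
Import numFieldNormedType.Exports.
Local Open Scope classical_set_scope.
Local Open Scope ring_scope.

Section defs.
Variable R : realType.

Definition joint_dens (lb : R) (z : R * R) : R :=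
  if (0 < z.1) && (z.1 < z.2) then
    (2 * pi * lb) ^+ 2 * z.1 * z.2 * expR (- (pi * lb * z.2 ^+ 2))
  else 0.

Definition thr (al Pw N M mu : R) : R :=
  M `^ (1 / (al * mu)) * (N / Pw) `^ ((2 - mu) / (al * mu)).

Definition A_UE (al Pw N M mu : R) : set (R * R) :=
  [set z | z.1 <= thr al Pw N M mu * z.2 `^ (2 / mu)].

Definition pA_integrand (lb al Pw N M mu : R) (y : R) : R :=
  2 * (pi * lb) ^+ 2 * y * expR (- (pi * lb * y ^+ 2)) *
  (Num.min y (thr al Pw N M mu * y `^ (2 / mu))) ^+ 2.

Definition pA_formula (lb al Pw N M mu : R) : \bar R :=
  (\int[lebesgue_measure]_(y in `]0%R, +oo[) (pA_integrand lb al Pw N M mu y)%:E)%E.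

Definition f_cond (lb al Pw N M mu : R) (x : R) : R :=
  2 * pi * lb * x *
  expR (- (pi * lb * (Num.max x (x `^ (mu / 2) * (Pw / N) `^ ((2 - mu) / (2 * al))
                                    * (1 / M) `^ (1 / (2 * al)))) ^+ 2))
  / fine (pA_formula lb al Pw N M mu).

Definition condprob d (T : measurableType d) (P : probability T R)
  (E A : set T) : R := fine (P (E `&` A)) / fine (P A).

End defs.

(* Main.v *)
Require Import Defs.
From HB Require Import structures.
From mathcomp Require Import all_boot all_order all_algebra.
From mathcomp Require Import all_classical all_reals all_analysis.
From mathcomp Require Import measurable_realfun ring lra.
Import Order.TTheory GRing.Theory Num.Theory.
Import numFieldNormedType.Exports.
Local Open Scope classical_set_scope.
Local Open Scope ring_scope.
Section S.
Variable R : realType.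
Local Notation mu := (@lebesgue_measure R).

Lemma der_gauss (c y : R) :
  is_derive y 1 (fun y : R => expR (- (c * y ^+ 2))) (expR (- (c * y ^+ 2)) * (- (c * (2 * y)))).
Proof.
have h1 : is_derive y 1 (fun y : R => - (c * y ^+ 2)) (- (c * (2 * y))).
  by apply: is_derive_eq; rewrite /GRing.scale/= !mulr1 -mulr2n mulr_natl.
exact: (@is_derive1_comp R expR (fun y : R => - (c * y ^+ 2)) y _ _ _ h1).
Qed.

Lemma int_tail (K c m : R) : 0 <= K -> 0 < c -> 0 <= m ->
  (\int[mu]_(y in `[m, +oo[) (K * y * expR (- (c * y ^+ 2)))%:E =
   (K / (2 * c) * expR (- (c * m ^+ 2)))%:E)%E.
Proof.
move=> K0 c0 m0.
pose F y := - (K / (2*c)) * expR (- (c * y ^+ 2)).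
have dF (y : R) : is_derive y (1:R) F (K * y * expR (- (c * y ^+ 2))).
  have := is_deriveZ (- (K / (2*c))) (der_gauss c y).
  move=> h; apply: is_derive_eq.
  rewrite /GRing.scale/=. field. by rewrite gt_eqF.
have cF : continuous F.
  by move=> y; apply: differentiable_continuous; apply/derivable1_diffP.
rewrite (@ge0_continuous_FTC2y _ _ F m 0).
- by rewrite sub0e /F /= mulNr opprK.
- by move=> x mx; rewrite mulr_ge0 ?expR_ge0 ?mulr_ge0//; apply: le_trans mx.
- apply: continuous_subspaceT => y.
  have ce : continuous (fun y : R => expR (- (c * y ^+ 2))).
    move=> z; apply: differentiable_continuous.
    have [h _] := der_gauss c z; exact/derivable1_diffP.
  apply: continuousM; last exact: ce.
  by apply: continuousM; [exact: cst_continuous|by move=> z; exact: cvg_id].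
- rewrite /F -(mulr0 (- (K / (2 * c)))).
  have h : expR (- (c * x ^+ 2)) @[x --> +oo] --> (0:R).
    have h1 : c * r ^+ 2 @[r --> +oo] --> +oo.
      by apply: gt0_cvgMry => //; exact: cvgr_expr2.
    have := cvg_comp _ _ h1 (@cvgr_expR R).
    exact.
  exact: cvgMl_tmp h.
- by move=> x _.
- exact: cvg_at_right_filter (cF m).
- by move=> x _; rewrite derive1E derive_val.
Qed.

Lemma int_lin (K a : R) : 0 < a ->
  (\int[mu]_(x in `[0%R, a]) (K * x)%:E = (K * a ^+ 2 / 2)%:E)%E.
Proof.
move=> a0.
pose F (x : R) := K / 2 * x ^+ 2.
have dF (x : R) : is_derive x (1:R) F (K * x).
  apply: is_derive_eq.
  by rewrite /GRing.scale/= !mulr1; field.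
have cF : continuous F.
  by move=> y; apply: differentiable_continuous; apply/derivable1_diffP.
have h : ((\int[mu]_(x in `[0%R, a]) (K * x)%:E) = (F a)%:E - (F 0)%:E)%E.
  apply: (continuous_FTC2 a0).
  - apply: continuous_subspaceT => y.
    apply: continuousM; first exact: cst_continuous.
    by move=> z; exact: cvg_id.
  - split.
    + by move=> ? _.
    + exact: cvg_at_right_filter (cF 0).
    + exact: cvg_at_left_filter (cF a).
  - by move=> ? _; rewrite derive1E derive_val.
by rewrite h /F expr0n /= mulr0 sube0; congr (_%:E); field.
Qed.

Lemma meas_jd (lb : R) : measurable_fun setT (fun z : R * R => (joint_dens lb z)%:E).
Proof.
apply/measurable_EFinP; rewrite /joint_dens.
apply: measurable_fun_ifT.
- apply: measurable_and.
  + by apply: measurable_fun_ltr => //; exact: measurable_fst.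
  + by apply: measurable_fun_ltr; [exact: measurable_fst|exact: measurable_snd].
- apply: measurable_funM; last first.
    apply: measurableT_comp; first exact: measurable_expR.
    apply: measurableT_comp => //.
    apply: measurable_funM => //.
    by apply: measurable_funX; exact: measurable_snd.
  apply: measurable_funM; last exact: measurable_snd.
  by apply: measurable_funM => //; exact: measurable_fst.
- by [].
Qed.

Lemma meas_AUE (al Pw N M mu : R) : measurable (A_UE al Pw N M mu : set (R * R)).
Proof.
have -> : (A_UE al Pw N M mu : set (R * R)) =
   (fun z : R * R => z.1 <= thr al Pw N M mu * z.2 `^ (2 / mu)) @^-1` [set true].
  by apply/seteqP; split => z /=; rewrite /A_UE /= => ->.
rewrite -[X in measurable X]setTI.
have mf : measurable_fun setT
    (fun z : R * R => z.1 <= thr al Pw N M mu * z.2 `^ (2 / mu)).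
  apply: measurable_fun_ler; first exact: measurable_fst.
  apply: measurable_funM => //.
  exact: (measurableT_comp (measurable_powR _) measurable_snd).
by apply: mf.
Qed.
End S.
Section K.
Variable R : realType.
Variables (lb al Pw N M mu : R).
Hypotheses (hal0 : 0 < al) (hPw : 0 < Pw) (hN : 0 < N) (hM0 : 0 < M) (hmu0 : 0 < mu).

Definition h0 (x : R) := x `^ (mu / 2) * (Pw / N) `^ ((2 - mu) / (2 * al)) * (1 / M) `^ (1 / (2 * al)).

Lemma thr_gt0 : 0 < thr al Pw N M mu.
Proof. by rewrite /thr mulr_gt0 // powR_gt0 // divr_gt0. Qed.

Lemma h0_gt0 x : 0 < x -> 0 < h0 x.
Proof. by move=> x0; rewrite /h0 !mulr_gt0 // powR_gt0 // divr_gt0. Qed.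

Lemma key (x y : R) : 0 < x -> 0 < y ->
  (x <= thr al Pw N M mu * y `^ (2 / mu)) = (h0 x <= y).
Proof.
move=> x0 y0.
have pP : forall a e : R, 0 < a -> 0 < a `^ e by move=> a e a0; exact: powR_gt0.
have NP : 0 < N / Pw by exact: divr_gt0.
have PN : 0 < Pw / N by exact: divr_gt0.
have M1 : 0 < 1 / M by exact: divr_gt0.
have lnM' : forall a b : R, 0 < a -> 0 < b -> ln (a * b) = ln a + ln b.
  by move=> a b a0 b0; rewrite lnM ?posrE.
have lnD' : forall a b : R, 0 < a -> 0 < b -> ln (a / b) = ln a - ln b.
  by move=> a b a0 b0; rewrite ln_div ?posrE.
rewrite -ler_ln ?posrE ?mulr_gt0 ?thr_gt0 ?pP //.
rewrite -[in RHS]ler_ln ?posrE ?h0_gt0 //.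
rewrite /h0 /thr.
rewrite lnM'; [|by rewrite mulr_gt0 ?pP|by rewrite pP].
rewrite lnM'; [|by rewrite pP|by rewrite pP].
rewrite lnM'; [|by rewrite mulr_gt0 ?pP|by rewrite pP].
rewrite lnM'; [|by rewrite pP|by rewrite pP].
rewrite !ln_powR lnD' // lnD' // lnD' // ln1.
set a := ln x; set b := ln y; set p := ln M; set q := ln N; set s := ln Pw.
rewrite -subr_le0 -[in RHS]subr_le0.
set L := (X in X <= 0 = _).
have -> : (mu / 2 * a + (2 - mu) / (2 * al) * (s - q) + 1 / (2 * al) * (0 - p) - b)
   = mu / 2 * L.
  rewrite /L; field.
  by rewrite !gt_eqF // mulr_gt0.
by rewrite pmulr_rle0 // divr_gt0.
Qed.
Hypothesis hlb : 0 < lb.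
Local Notation mu_ := (@lebesgue_measure R).

Lemma patch0 (T : Type) (D : set T) (f : T -> \bar R) x : ~ D x -> (f \_ D) x = 0%E.
Proof. by move=> nD; rewrite patchE memNset. Qed.

Lemma patch1 (T : Type) (D : set T) (f : T -> \bar R) x : D x -> (f \_ D) x = f x.
Proof. by move=> Dx; rewrite patchE mem_set. Qed.

Lemma jd_ge0 z : 0 <= joint_dens lb z.
Proof.
rewrite /joint_dens; case: ifP => // /andP[z1 z2].
have z20 := lt_trans z1 z2.
by rewrite !mulr_ge0 ?expR_ge0 ?sqr_ge0 // ?ltW // pi_gt0.
Qed.

Lemma lin_meas (K : R) (D : set R) : measurable_fun D (fun x : R => (K * x)%:E).
Proof.
apply/measurable_EFinP; apply: measurable_funM => //.
Qed.

Lemma memI (I : interval R) (x : R) : (x \in [set` I]) = (x \in I).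
Proof. by apply/idP/idP => [/set_mem //|h]; exact: mem_set. Qed.

Lemma memA x y : ((x, y) \in A_UE al Pw N M mu) = (x <= thr al Pw N M mu * y `^ (2 / mu)).
Proof. by apply/idP/idP => [/set_mem //|H]; exact: mem_set. Qed.

Lemma inner1 (y : R) :
  (\int[mu_]_x (((fun z : R * R => (joint_dens lb z)%:E) \_ (A_UE al Pw N M mu)) (x, y)))%E
  = (((fun y => (pA_integrand lb al Pw N M mu y)%:E) \_ `]0%R, +oo[) y).
Proof.
have [y0|y0] := ltP 0 y; last first.
  rewrite patch0; last by rewrite /= in_itv /= andbT; apply/negP; rewrite -leNgt.
  rewrite (eq_integral (fun=> 0%E)); first exact: integral0.
  move=> x _; rewrite patchE; case: ifP => // _; rewrite /joint_dens /=.
  case: ifP => // /andP[x0 xy].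
  by have := lt_le_trans (lt_trans x0 xy) y0; rewrite ltxx.
set g := thr al Pw N M mu * y `^ (2 / mu).
have g0 : 0 < g by rewrite mulr_gt0 ?thr_gt0 ?powR_gt0.
set K := (2 * pi * lb) ^+ 2 * y * expR (- (pi * lb * y ^+ 2)).
rewrite patch1; last by rewrite /= in_itv /= andbT.
have [gy|yg] := ltP g y.
- transitivity (\int[mu_]_(x in `]0%R, g]) (K * x)%:E)%E.
    rewrite [RHS]integral_mkcond; apply: eq_integral => x _.
    rewrite !patchE memA -/g memI in_itv /= /joint_dens /=.
    case: (ltP 0 x) => x0 /=; case: (leP x g) => xg /=; case: (ltP x y) => xy //=;
      try (congr (_%:E); rewrite /K; ring); exfalso; lra.
  rewrite (@integral_itv_bndoo R _ _ _ false false); last exact: lin_meas.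
  rewrite -(@integral_itv_bndoo R _ _ _ true false); last exact: lin_meas.
  rewrite int_lin //; congr (_%:E).
  by rewrite /pA_integrand -/g (min_r (ltW gy)) /K; field.
- transitivity (\int[mu_]_(x in `]0%R, y[) (K * x)%:E)%E.
    rewrite [RHS]integral_mkcond; apply: eq_integral => x _.
    rewrite !patchE memA -/g memI in_itv /= /joint_dens /=.
    case: (ltP 0 x) => x0 /=; case: (leP x g) => xg /=; case: (ltP x y) => xy //=;
      try (congr (_%:E); rewrite /K; ring); exfalso; lra.
  rewrite -(@integral_itv_bndoo R _ _ _ true false); last exact: lin_meas.
  rewrite int_lin //; congr (_%:E).
  by rewrite /pA_integrand -/g (min_l yg) /K; field.
Qed.

Lemma part1 : (\int[mu_ \x mu_]_(z in A_UE al Pw N M mu) (joint_dens lb z)%:E)%E =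
  pA_formula lb al Pw N M mu.
Proof.
rewrite integral_mkcond (fubini_tonelli2 _ _ _).
- rewrite /pA_formula [RHS]integral_mkcond; apply: eq_integral => y _.
  exact: inner1.
- apply/(measurable_restrictT _ (@meas_AUE R al Pw N M mu)).
  by apply: (measurable_funS measurableT) => //; exact: meas_jd.
- by move=> z; rewrite patchE; case: ifP => // _; rewrite lee_fin jd_ge0.
Qed.

Lemma gauss_meas (K c : R) (D : set R) :
  measurable_fun D (fun y : R => (K * y * expR (- (c * y ^+ 2)))%:E).
Proof.
apply/measurable_EFinP.
apply: (measurable_funS measurableT) => //.
apply: measurable_funM => //.
apply: measurableT_comp; first exact: measurable_expR.
apply: measurableT_comp => //.
by apply: measurable_funM => //; exact: measurable_funX.
Qed.

Definition q (x : R) := 2 * pi * lb * x * expR (- (pi * lb * (Num.max x (h0 x)) ^+ 2)).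

Lemma q_meas (D : set R) : measurable_fun D (fun x => (q x)%:E).
Proof.
apply/measurable_EFinP.
apply: (measurable_funS measurableT) => //.
apply: measurable_funM => //.
apply: measurableT_comp; first exact: measurable_expR.
apply: measurableT_comp => //.
apply: measurable_funM => //; apply: measurable_funX.
apply: measurable_maxr => //.
rewrite /h0; apply: measurable_funM => //.
by apply: measurable_funM => //; exact: measurable_powR.
Qed.

Lemma inner2 (B : set R) (x : R) :
  (\int[mu_]_y (((fun z : R * R => (joint_dens lb z)%:E) \_
      (A_UE al Pw N M mu `&` (B `*` setT))) (x, y)))%E
  = (((fun x => (q x)%:E) \_ (B `&` `]0%R, +oo[)) x).
Proof.
have [[xB x0]|nx] := pselect ((B `&` `]0%R, +oo[) x); last first.
  rewrite patch0 //.
  rewrite (eq_integral (fun=> 0%E)); first exact: integral0.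
  move=> y _; rewrite patchE; case: ifP => // /set_mem [_ [xB' _]].
  rewrite /joint_dens /=; case: ifP => // /andP[x0 _].
  by exfalso; apply: nx; split => //; rewrite /= in_itv /= andbT.
have x0' : 0 < x by move: x0; rewrite /= in_itv /= andbT.
rewrite patch1; last by split.
set Kx := (2 * pi * lb) ^+ 2 * x.
have key' y : x < y -> (x <= thr al Pw N M mu * y `^ (2 / mu)) = (h0 x <= y).
  by move=> xy; apply: key => //; exact: lt_trans x0' xy.
have memAB y : ((x, y) \in A_UE al Pw N M mu `&` (B `*` setT)) =
    (x <= thr al Pw N M mu * y `^ (2 / mu)).
  apply/idP/idP => [/set_mem [] //|h]; apply: mem_set; split => //.
have pl : 0 < pi * lb by rewrite mulr_gt0 // pi_gt0.
have Kx0 : 0 <= Kx by rewrite /Kx mulr_ge0 ?sqr_ge0 // ltW.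
have [hx|hx] := leP (h0 x) x.
- transitivity (\int[mu_]_(y in `]x, +oo[) (Kx * y * expR (- (pi * lb * y ^+ 2)))%:E)%E.
    rewrite [RHS]integral_mkcond; apply: eq_integral => y _.
    rewrite !patchE memAB memI in_itv /= andbT /joint_dens /= x0' /=.
    case: (ltP x y) => xy.
      by rewrite key' // (le_trans hx (ltW xy)); congr (_%:E); rewrite /Kx; ring.
    by case: ifP.
  rewrite integral_itv_obnd_cbnd; last exact: gauss_meas.
  rewrite (@int_tail R _ _ _ Kx0 pl (ltW x0')).
  congr (_%:E); rewrite /q (max_l hx) /Kx.
  have pi0 : (0:R) < pi by exact: pi_gt0.
  move: (pi : R) pi0 => p p0.
  by field; rewrite !gt_eqF.
- transitivity (\int[mu_]_(y in `[h0 x, +oo[) (Kx * y * expR (- (pi * lb * y ^+ 2)))%:E)%E.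
    rewrite [RHS]integral_mkcond; apply: eq_integral => y _.
    rewrite !patchE memAB memI in_itv /= andbT /joint_dens /= x0' /=.
    case: (leP (h0 x) y) => hy.
      have xy := lt_le_trans hx hy.
      by rewrite xy key' //= hy; congr (_%:E); rewrite /Kx; ring.
    case: (ltP x y) => xy; last by case: ifP.
    by rewrite key' // leNgt hy.
  rewrite (@int_tail R _ _ _ Kx0 pl (ltW (@h0_gt0 x x0'))).
  congr (_%:E); rewrite /q (max_r (ltW hx)) /Kx.
  have pi0 : (0:R) < pi by exact: pi_gt0.
  move: (pi : R) pi0 => p p0.
  by field; rewrite !gt_eqF.
Qed.

Lemma part2 (B : set R) (mB : measurable B) :
  (\int[mu_ \x mu_]_(z in A_UE al Pw N M mu `&` (B `*` setT)) (joint_dens lb z)%:E)%E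
  = (\int[mu_]_(x in B `&` `]0%R, +oo[) (q x)%:E)%E.
Proof.
have mS : measurable (A_UE al Pw N M mu `&` (B `*` setT)).
  by apply: measurableI; [exact: meas_AUE|exact: measurableX].
rewrite integral_mkcond (fubini_tonelli1 _ _ _).
- rewrite [RHS]integral_mkcond; apply: eq_integral => x _.
  exact: inner2.
- apply/(measurable_restrictT _ mS).
  by apply: (measurable_funS measurableT) => //; exact: meas_jd.
- by move=> z; rewrite patchE; case: ifP => // _; rewrite lee_fin jd_ge0.
Qed.
End K.

Theorem lemma2 (R : realType) (d : measure_display) (T : measurableType d)
  (P : probability T R) (X11 X21 : T -> R)
  (lb al Pw N M mu : R)
  (hlb : 0 < lb) (hal : 2 < al) (hPw : 0 < Pw) (hN : 0 < N) (hM : 1 <= M)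
  (hmu1 : 1 <= mu) (hmu2 : mu <= 2)
  (mX11 : measurable_fun setT X11) (mX21 : measurable_fun setT X21)
  (hjoint : forall A : set (R * R), measurable A ->
     P ((fun t => (X11 t, X21 t)) @^-1` A) =
     (\int[(@lebesgue_measure R) \x (@lebesgue_measure R)]_(z in A)
        (joint_dens lb z)%:E)%E) :
  let AUE := (fun t => (X11 t, X21 t)) @^-1` A_UE al Pw N M mu in
  P AUE = pA_formula lb al Pw N M mu /\
  forall B : set R, measurable B ->
    (condprob P (X11 @^-1` B) AUE)%:E =
    (\int[lebesgue_measure]_(x in B `&` `]0%R, +oo[) (f_cond lb al Pw N M mu x)%:E)%E.
Proof.
move=> AUE.
have hal0 : 0 < al by apply: lt_trans hal.
have hM0 : 0 < M by apply: lt_le_trans hM.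
have hmu0 : 0 < mu by apply: lt_le_trans hmu1.
have p1 : P AUE = pA_formula lb al Pw N M mu.
  rewrite /AUE hjoint; last exact: meas_AUE.
  by rewrite part1.
split => // B mB.
have mS : measurable (A_UE al Pw N M mu `&` (B `*` setT)).
  by apply: measurableI; [exact: meas_AUE|exact: measurableX].
have hE : X11 @^-1` B `&` AUE =
    (fun t => (X11 t, X21 t)) @^-1` (A_UE al Pw N M mu `&` (B `*` setT)).
  apply/seteqP; split => t /=.
    by move=> [xB hA]; split => //; split.
  by move=> [hA [xB _]]; split.
have mpair : measurable_fun setT (fun t => (X11 t, X21 t)).
  exact: measurable_fun_pair.
have mE : measurable (X11 @^-1` B `&` AUE).
  by rewrite hE -[X in measurable X]setTI; apply: mpair.
have PE : P (X11 @^-1` B `&` AUE) =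
    (\int[lebesgue_measure]_(x in B `&` `]0%R, +oo[) (@q R lb al Pw N M mu x)%:E)%E.
  by rewrite hE hjoint // part2.
set p := fine (pA_formula lb al Pw N M mu).
have p0 : 0 <= p by rewrite /p -p1 fine_ge0 // measure_ge0.
have mD : measurable (B `&` `]0%R, +oo[) by apply: measurableI.
transitivity (\int[lebesgue_measure]_(x in B `&` `]0%R, +oo[)
                 ((@q R lb al Pw N M mu x)%:E * (p^-1)%:E))%E; last first.
  by apply: eq_integral => x _; rewrite -EFinM.
rewrite ge0_integralZr //; last 3 first.
- exact: q_meas.
- move=> x [_ /=]; rewrite in_itv /= andbT => x0.
  rewrite lee_fin /q mulr_ge0 ?expR_ge0 // mulr_ge0 // ?ltW //.
  by rewrite !mulr_gt0 // pi_gt0.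
- by rewrite lee_fin invr_ge0.
rewrite -PE /condprob p1 -/p EFinM fineK //.
exact: fin_num_measure.
Qed.
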